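(* Let $N=\{1,\ldots,n\}$. $\mathscr{BG}_+(n)$, viewed as a subset of $\mathbb{R}^{2^N\setminus\{\varnothing,N\}}$, is a $(2^n-2)$-dimensional polytope.
   Context: A game on $N$ is a map $v:2^N\to\mathbb{R}$ with $v(\varnothing)=0$. $\mathscr{G}_+(n)$ is the set of games with $v(S)\geqslant 0$ for all $S$ and $v(N)=1$. A collection $\mathscr{B}$ of nonempty subsets of $N$ is balanced if there exist positive weights $(\lambda_S)_{S\in\mathscr{B}}$ with $\sum_{S\in\mathscr{B},S\ni i}\lambda_S=1$ for all $i\in N$; minimal balanced if no proper subcollection is balanced, with unique weights $\lambda^{\mathscr{B}}_S$. $\mathfrak{B}^*(n)$ is the set of minimal balanced collections on $N$ other than $\{N\}$. $\mathscr{BG}_+(n)=\{v\in\mathscr{G}_+(n):\sum_{S\in\mathscr{B}}\lambda^{\mathscr{B}}_Sv(S)\leqslant 1\ \forall\mathscr{B}\in\mathfrak{B}^*(n)\}$, i.e. the nonnegative games with $v(N)=1$ having nonempty core. *)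

(* Defs.v *)
From HB Require Import structures.
From mathcomp Require Import all_boot all_order all_algebra.
Set Implicit Arguments. Unset Strict Implicit. Unset Printing Implicit Defensive.
Import Order.TTheory GRing.Theory Num.Theory.
Local Open Scope ring_scope.

Section Games.
Variable R : realFieldType.
Variable n : nat.

Definition coords : predArgType :=
  {S : {set 'I_n} | (S != set0) && (S != setT)}.

(* The game v with v(emptyset) = 0, v(N) = 1 and v(S) = x S otherwise. *)
Definition game_of (x : coords -> R) (S : {set 'I_n}) : R :=
  match insub S : option coords with
  | Some s => x s
  | None => if S == set0 then 0 else 1
  end.

Definition balancing_weights (B : {set {set 'I_n}}) (lam : {set 'I_n} -> R) :=
  (forall S, S \in B -> 0 < lam S) /\
  (forall i : 'I_n, \sum_(S in B | i \in S) lam S = 1).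

Definition balanced (B : {set {set 'I_n}}) :=
  set0 \notin B /\ exists lam, balancing_weights B lam.

Definition minimal_balanced (B : {set {set 'I_n}}) :=
  balanced B /\ forall B' : {set {set 'I_n}}, B' \proper B -> ~ balanced B'.

(* For a minimal balanced
   collection the balancing weights are unique, so "the weights lambda^B"
   is rendered by quantifying over all balancing weights of B. *)
Definition BGplus (x : coords -> R) : Prop :=
  (forall s, 0 <= x s) /\
  (forall B : {set {set 'I_n}}, minimal_balanced B -> B != [set setT] ->
     forall lam, balancing_weights B lam ->
       \sum_(S in B) lam S * game_of x S <= 1).
End Games.

Section Polytopes.
Variable R : realFieldType.
Variable T : finType.

Definition is_polytope (P : (T -> R) -> Prop) : Prop :=
  (exists (m : nat) (A : 'I_m -> T -> R) (b : 'I_m -> R),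
     forall x, P x <-> forall k, \sum_(t : T) A k t * x t <= b k) /\
  (exists M : R, forall x, P x -> forall t, `|x t| <= M).

Definition aff_indep (k : nat) (p : 'I_k.+1 -> T -> R) : bool :=
  \rank (\matrix_(i < k, j < #|T|)
           (p (lift ord0 i) (enum_val j) - p ord0 (enum_val j))) == k.

Definition affine_dim (P : (T -> R) -> Prop) (d : nat) : Prop :=
  (exists p : 'I_d.+1 -> T -> R, (forall i, P (p i)) /\ aff_indep p) /\
  (forall p : 'I_d.+2 -> T -> R, (forall i, P (p i)) -> ~~ aff_indep p).
End Polytopes.

(* Main.v *)
Require Import Defs.
From Stdlib Require ClassicalEpsilon Classical_Prop.
From HB Require Import structures.
From mathcomp Require Import all_boot all_order all_algebra.
Set Implicit Arguments. Unset Strict Implicit. Unset Printing Implicit Defensive.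
Import Order.TTheory GRing.Theory Num.Theory.
Local Open Scope ring_scope.

Section Aux.
Variable R : realFieldType.
Variable n : nat.
Implicit Types (B : {set {set 'I_n}}) (lam : {set 'I_n} -> R).

Lemma bw_le_eq B lam lam' : set0 \notin B ->
  balancing_weights B lam -> balancing_weights B lam' ->
  (forall S, S \in B -> lam S <= lam' S) -> forall S, S \in B -> lam S = lam' S.
Proof.
move=> B0 [_ h] [_ h'] hle S SB.
have /set0Pn [i iS] : S != set0 by apply: contraNneq B0 => <-.
have hs : \sum_(T in B | i \in T) (lam' T - lam T) = 0.
  by rewrite sumrB h h' subrr.
apply/eqP; rewrite eq_sym -subr_eq0; apply/eqP.
have := psumr_eq0P _ hs; apply.
- by move=> T /andP[TB _]; rewrite subr_ge0 hle.
- by rewrite SB iS.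
Qed.

Lemma bw_unique B lam lam' : minimal_balanced R B ->
  balancing_weights B lam -> balancing_weights B lam' ->
  forall S, S \in B -> lam S = lam' S.
Proof.
move=> [[B0 _] hmin] hl hl'.
apply: bw_le_eq => // S1 S1B.
rewrite leNgt; apply/negP => hlt.
have [hpos hsum] := hl; have [hpos' hsum'] := hl'.
case: (@arg_minP _ _ _ S1 (mem B) (fun S => lam' S / lam S) S1B) => Sm SmB0 hmin'.
have SmB : Sm \in B := SmB0.
set c := lam' Sm / lam Sm.
have lt1 : c < 1.
  apply: le_lt_trans (hmin' _ S1B) _.
  by rewrite ltr_pdivrMr ?hpos // mul1r.
have cle : forall S, S \in B -> c * lam S <= lam' S.
  by move=> S SB; rewrite -ler_pdivlMr ?hpos // hmin'.
pose B' := [set S in B | c * lam S < lam' S].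
pose mu S := (1 - c)^-1 * (lam' S - c * lam S).
apply: (hmin B').
  apply/properP; split; first by apply/subsetP => S; rewrite inE => /andP[].
  exists Sm => //; rewrite inE SmB /= /c.
  by rewrite mulrAC -mulrA divff ?mulr1 ?ltxx // gt_eqF ?hpos.
split.
  by apply: contra B0; rewrite inE => /andP[].
exists mu; split.
  move=> S; rewrite inE => /andP[SB hS].
  by rewrite /mu mulr_gt0 // ?invr_gt0 ?subr_gt0 // subr_gt0.
move=> i.
have -> : \sum_(S in B' | i \in S) mu S = \sum_(S in B | i \in S) mu S.
  rewrite [RHS](bigID (fun S => S \in B')) /=.
  rewrite [X in _ + X]big1 ?addr0.
    by apply: eq_bigl => S; rewrite inE; case: (S \in B); rewrite ?andbF //= andbC.
  move=> S /andP[/andP[SB _]]; rewrite inE SB /= -leNgt => hS.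
  rewrite /mu; have -> : lam' S = c * lam S by apply/eqP; rewrite eq_le hS cle.
  by rewrite subrr mulr0.
rewrite -mulr_sumr sumrB -mulr_sumr hsum hsum' mulr1 mulVf //.
by rewrite subr_eq0 eq_sym lt_eqF.
Qed.

Lemma setT_neq0 : (0 < n)%N -> [set: 'I_n] != set0.
Proof. by move=> hn; apply/set0Pn; exists (Ordinal hn). Qed.

Lemma card_coords : (0 < n)%N -> #|coords n| = (2 ^ n - 2)%N.
Proof.
move=> hn.
have h2 : #|{: {set 'I_n}}| = (2 ^ n)%N.
  by rewrite -cardsT -powersetT card_powerset cardsT card_ord.
rewrite card_sig -h2 [in RHS](cardD1 set0) [in RHS](cardD1 setT) !inE /=.
rewrite (setT_neq0 hn) /= add1n add1n subn2 /=.
by apply: eq_card => S; rewrite !inE andbC andbT.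
Qed.

Lemma game_val (x : coords n -> R) (t : coords n) : game_of x (val t) = x t.
Proof. by rewrite /game_of valK. Qed.

Lemma sum_coords (F : {set 'I_n} -> R) :
  \sum_(t : coords n) F (val t) = \sum_(S | (S != set0) && (S != setT)) F S.
Proof.
symmetry; rewrite (reindex_omap (val : coords n -> {set 'I_n}) insub); last first.
  by move=> S hS; rewrite insubT.
apply: eq_bigl => -[S hS] /=.
rewrite hS /=; case: insubP => [u _ hu|]; last by rewrite hS.
by apply/eqP; congr Some; apply: val_inj.
Qed.

Lemma game_sum (hn : (0 < n)%N) (x : coords n -> R) B lam :
  \sum_(S in B) lam S * game_of x S =
  \sum_(t : coords n) (if val t \in B then lam (val t) else 0) * x t
  + (if setT \in B then lam setT else 0).
Proof.
rewrite big_mkcond (bigD1 set0) //= (bigD1 setT) //=; last first.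
  exact: setT_neq0.
have -> : game_of x set0 = 0 by rewrite /game_of insubF ?eqxx.
have -> : game_of x setT = 1.
  by rewrite /game_of insubF ?eqxx ?andbF // (negbTE (setT_neq0 hn)).
rewrite mulr0 mulr1 if_same add0r addrC; congr (_ + _).
rewrite (eq_bigr (fun t => (if val t \in B then lam (val t) * game_of x (val t) else 0))); last first.
  by move=> t _; rewrite game_val; case: ifP; rewrite ?mul0r.
by rewrite (sum_coords (fun S => if S \in B then lam S * game_of x S else 0)); apply: eq_bigl => S; rewrite andbC.
Qed.


Lemma balanced_T (hn : (0 < n)%N) : balanced R [set [set: 'I_n]].
Proof.
split; first by rewrite inE eq_sym setT_neq0.
exists (fun _ => 1); split; first by move=> *; exact: ltr01.
move=> i; rewrite (big_pred1 setT) // => S; rewrite !inE.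
by case: eqP => // ->; rewrite inE.
Qed.

Lemma setT_notin (hn : (0 < n)%N) B :
  minimal_balanced R B -> B != [set setT] -> setT \notin B.
Proof.
move=> [_ hmin] hneq; apply/negP => TB.
apply: (hmin [set setT]) (balanced_T hn).
rewrite properE sub1set TB /=.
by apply: contra hneq => sub; rewrite eqEsubset sub sub1set TB.
Qed.

Lemma lam_le1 B lam S : balancing_weights B lam -> S \in B -> S != set0 ->
  lam S <= 1.
Proof.
move=> [hp h] SB /set0Pn [i iS].
rewrite -(h i) (bigD1 S) /= ?SB ?iS //= lerDl sumr_ge0 // => T /andP[/andP[TB _] _].
exact/ltW/hp.
Qed.

Lemma BG_unit (hn : (0 < n)%N) (t0 : coords n) :
  BGplus (fun t => ((t == t0)%:R : R)).
Proof.
split; first by move=> s; exact: ler0n.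
move=> B mb hneq lam hl.
rewrite game_sum // (negbTE (setT_notin hn mb hneq)) addr0.
rewrite (bigD1 t0) //= eqxx mulr1 big1 ?addr0; last first.
  by move=> t /negbTE ->; rewrite mulr0.
case: ifP => h; last exact: ler01.
apply: lam_le1 hl h _.
by case/andP: (valP t0).
Qed.

Lemma BG_zero (hn : (0 < n)%N) : BGplus (fun _ : coords n => (0 : R)).
Proof.
split; first by [].
move=> B mb hneq lam hl.
rewrite game_sum // (negbTE (setT_notin hn mb hneq)) addr0.
by rewrite big1 ?ler01 // => t _; rewrite mulr0.
Qed.

Lemma game_ge0 (x : coords n -> R) S : BGplus x -> 0 <= game_of x S.
Proof.
move=> [h0 _]; rewrite /game_of; case: insub => [s|]; first exact: h0.
by case: ifP => _; rewrite ?ler01.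
Qed.

Lemma setC_neq0 (S : {set 'I_n}) : S != setT -> ~: S != set0.
Proof.
apply: contra => /eqP h; apply/eqP.
by rewrite -(setCK S) h setC0.
Qed.

Lemma S_neq_C (hn : (0 < n)%N) (S : {set 'I_n}) : S != ~: S.
Proof.
apply/negP => /eqP h; have := in_setC (Ordinal hn) S; rewrite -h.
by case: (Ordinal hn \in S).
Qed.

Lemma pair_bw (hn : (0 < n)%N) (S : {set 'I_n}) :
  balancing_weights [set S; ~: S] (fun _ => (1 : R)).
Proof.
split; first by move=> *; exact: ltr01.
move=> i; rewrite big_mkcondr big_setU1 /=; last by rewrite inE S_neq_C.
rewrite big_set1 inE.
by case: (i \in S); rewrite ?addr0 ?add0r.
Qed.

Lemma pair_mb (hn : (0 < n)%N) (S : {set 'I_n}) :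
  S != set0 -> S != setT -> minimal_balanced R [set S; ~: S].
Proof.
move=> h0 hT; split.
  split; last by exists (fun _ => 1); exact: pair_bw.
  by rewrite !inE negb_or eq_sym h0 eq_sym setC_neq0.
move=> B' /properP [sub [T TB TnB']] [_ [mu [_ hmu]]].
have T0 : T != set0.
  by case/set2P: TB => ->; rewrite ?h0 ?setC_neq0.
case/set0Pn: T0 => i iT.
have : \sum_(T' in B' | i \in T') mu T' = 0.
  apply: big1 => T' /andP[T'B iT'].
  have T'B2 := subsetP sub _ T'B.
  exfalso.
  case/set2P: TB iT TnB' => -> iT TnB'; case/set2P: T'B2 iT' T'B => -> iT' T'B.
  - by rewrite T'B in TnB'.
  - by rewrite inE iT in iT'.
  - by rewrite inE iT' in iT.
  - by rewrite T'B in TnB'.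
by rewrite hmu => /eqP; rewrite oner_eq0.
Qed.

Lemma BG_bound (hn : (0 < n)%N) (x : coords n -> R) :
  BGplus x -> forall t, `|x t| <= 1.
Proof.
move=> hx t; have [h0 h1] := hx.
have /andP[hS0 hST] := valP t.
set S := val t in hS0 hST.
have hneq : [set S; ~: S] != [set setT].
  apply/eqP => h; have : S \in [set setT] by rewrite -h set21.
  by rewrite inE (negbTE hST).
have := h1 _ (pair_mb hn hS0 hST) hneq _ (pair_bw hn S).
rewrite big_setU1 /=; last by rewrite inE S_neq_C.
rewrite big_set1 !mul1r game_val ger0_norm ?h0 // => h.
apply: le_trans h; rewrite lerDl; exact: game_ge0.
Qed.


Definition cond B := minimal_balanced R B /\ B != [set setT].

Lemma lamB_ex B : exists lam : {set 'I_n} -> R,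
  (cond B -> balancing_weights B lam) /\ (~ cond B -> lam = fun _ => 0).
Proof.
case: (Classical_Prop.classic (cond B)) => h.
  have [[[_ [lam hl]] _] _] := h.
  by exists lam; split.
by exists (fun _ => 0); split => // /h.
Qed.

Definition lamB B : {set 'I_n} -> R :=
  proj1_sig (ClassicalEpsilon.constructive_indefinite_description _ (lamB_ex B)).

Lemma lamB_spec B :
  (cond B -> balancing_weights B (lamB B)) /\ (~ cond B -> lamB B = fun _ => 0).
Proof. exact: (proj2_sig (ClassicalEpsilon.constructive_indefinite_description _ (lamB_ex B))). Qed.

Definition E := (coords n + {set {set 'I_n}})%type.

Definition Af (e : E) (t : coords n) : R :=
  match e with
  | inl t' => if t == t' then -1 else 0
  | inr B => if val t \in B then lamB B (val t) else 0
  end.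

Definition bf (e : E) : R :=
  match e with
  | inl _ => 0
  | inr B => 1 - (if setT \in B then lamB B setT else 0)
  end.

Lemma sum_inl (x : coords n -> R) t' : \sum_t Af (inl t') t * x t = - x t'.
Proof.
rewrite (bigD1 t') //= eqxx mulN1r big1 ?addr0 //.
by move=> t /negbTE ->; rewrite mul0r.
Qed.

Lemma P_iff (hn : (0 < n)%N) (x : coords n -> R) :
  BGplus x <-> forall e, \sum_t Af e t * x t <= bf e.
Proof.
split.
  move=> [h0 h1] [t'|B]; first by rewrite sum_inl /= oppr_le0.
  have [hc hnc] := lamB_spec B.
  case: (Classical_Prop.classic (cond B)) => c.
    have := h1 B c.1 c.2 (lamB B) (hc c).
    by rewrite game_sum // /bf lerBrDr.
  rewrite /bf /Af (hnc c) if_same subr0 big1 ?ler01 //.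
  by move=> t _; rewrite if_same mul0r.
move=> h; split.
  by move=> t; have := h (inl t); rewrite sum_inl /= oppr_le0.
move=> B mb hneq lam hl.
have [hc _] := lamB_spec B.
rewrite (eq_bigr (fun S => lamB B S * game_of x S)); last first.
  by move=> S SB; rewrite (bw_unique mb hl (hc (conj mb hneq))).
by rewrite game_sum //; have := h (inr B); rewrite /bf lerBrDr.
Qed.

Lemma rank_castid (k m : nat) (e : k = m) :
  \rank (\matrix_(i < k, j < m) ((j == cast_ord e i)%:R : R)) = k.
Proof.
case: m / e.
have -> : (\matrix_(i < k, j < k) ((j == cast_ord erefl i)%:R : R)) = 1%:M.
  by apply/matrixP => i j; rewrite !mxE cast_ord_id eq_sym.
exact: mxrank1.
Qed.

End Aux.

Theorem proposition1 (R : realFieldType) (n : nat) (hn : (0 < n)%N) :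
  is_polytope (@BGplus R n) /\ affine_dim (@BGplus R n) (2 ^ n - 2)%N.
Proof.
split.
  split; last by exists 1; exact: BG_bound.
  exists #|{: E n}|, (fun k t => @Af R n (enum_val (k : 'I_#|{: E n}|) : E n) t), (fun k => @bf R n (enum_val (k : 'I_#|{: E n}|) : E n)).
  move=> x; rewrite (P_iff hn); split => H k; first exact: H.
  by rewrite -(enum_rankK k); exact: H.
set d := (2 ^ n - 2)%N.
have e : d = #|coords n| by rewrite card_coords.
split.
  pose p (i : 'I_d.+1) : coords n -> R :=
    match unlift ord0 i with
    | Some j => fun t => ((t == enum_val (cast_ord e j))%:R : R)
    | None => fun _ => 0
    end.
  exists p; split.
    by move=> i; rewrite /p; case: unlift => [j|]; [exact: BG_unit | exact: BG_zero].
  rewrite /aff_indep.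
  set M := (\matrix_(_ < _, _ < _) _).
  have -> : M = \matrix_(i < d, j < #|coords n|) ((j == cast_ord e i)%:R : R).
    apply/matrixP => i j; rewrite !mxE /p liftK unlift_none subr0.
    by rewrite (inj_eq enum_val_inj).
  by rewrite rank_castid.
move=> p _; rewrite /aff_indep; apply/negP => /eqP h.
set M := (\matrix_(_ < _, _ < _) _) in h.
have := rank_leq_col M; rewrite h.
by rewrite -e ltnn.
Qed.
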